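(* Let $r\in\mathbb{N}_0$ and $n\ge0$. The expected number $E_{n;r}$ of $r$-branches in a binary tree chosen uniformly at random among binary trees with $n$ inner nodes is \[ E_{n;r}=\frac{n+1}{\binom{2n}{n}}\sum_{\lambda\ge1}\lambda\bigg[\binom{2n}{n+1-\lambda2^r}-2\binom{2n}{n-\lambda2^r}+\binom{2n}{n-1-\lambda2^r}\bigg], \] where binomial coefficients with negative lower index are $0$.
   Context: A binary tree is either a leaf $\square$ or an inner node with an ordered pair of subtrees (left, right) which are binary trees; its size is its number of inner nodes. The register function is defined by $\mathrm{Reg}(\square)=0$, and for a tree with subtrees $t_1,t_2$: $\mathrm{Reg}(t)=\max\{\mathrm{Reg}(t_1),\mathrm{Reg}(t_2)\}$ if these differ, and $\mathrm{Reg}(t_1)+1$ otherwise. Label every node (inner node or leaf) by the register function of the subtree rooted at it. An $r$-branch is a maximal chain of nodes labeled $r$, i.e. a connected component (with respect to parent–child edges) of the set of nodes labeled $r$. *)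

(* Defs.v *)
From mathcomp Require Import all_boot all_order all_algebra.
Set Implicit Arguments. Unset Strict Implicit. Unset Printing Implicit Defensive.
Import GRing.Theory Num.Theory.

Inductive btree : Type := Leaf | Node of btree & btree.

Fixpoint tsize (t : btree) : nat :=
  if t is Node a b then (tsize a + tsize b).+1 else 0.

Fixpoint reg (t : btree) : nat :=
  if t is Node a b then
    let ra := reg a in let rb := reg b in
    if ra == rb then ra.+1 else maxn ra rb
  else 0.

Fixpoint trees_depth (d : nat) : seq btree :=
  Leaf :: (if d is d'.+1 then
             [seq Node l r | l <- trees_depth d', r <- trees_depth d']
           else [::]).

(* All binary trees with exactly n inner nodes (height <= n suffices). *)
Definition trees (n : nat) : seq btree :=
  [seq t <- trees_depth n | tsize t == n].

(* Every node (inner node or leaf) v is labelled reg(subtree at v).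
   [tops r t p] counts the nodes of t labelled r whose parent is not
   labelled r, where p says whether the parent of the root of t is labelled r.
   In a rooted tree, each connected component (w.r.t. parent-child edges)
   of the set of nodes labelled r has exactly one topmost node, namely a node
   labelled r whose parent is absent or not labelled r; so this counts the
   r-branches. *)
Fixpoint tops (r : nat) (t : btree) (parent_r : bool) : nat :=
  let here := reg t == r in
  ((here && ~~ parent_r) : nat) +
  (if t is Node a b then tops r a here + tops r b here else 0).

Definition branches (r : nat) (t : btree) : nat := tops r t false.

Definition E_branches (n r : nat) : rat :=
  (\sum_(t <- trees n) (branches r t)%:R) / (size (trees n))%:R.

Definition binZ (m : nat) (k : int) : nat :=
  match k with Posz k' => 'C(m, k') | Negz _ => 0%N end.

(* Main.v *)
Require Import Defs.
From mathcomp Require Import all_boot all_order all_algebra.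
From mathcomp Require Import ring zify.
Import GRing.Theory Num.Theory.
Lemma arith_node x y r : (nat_of_bool ((if x == y then x.+1 else maxn x y) == r) =
  ((0 < r) && (x == r.-1) && (y == r.-1)) +
  ((x == r) && (y < r)) + ((x < r) && (y == r)))%N.
Proof.
case: (ltngtP x y) => hxy.
- case: (ltngtP y r) => hyr; case: (ltngtP x r) => hxr; case: (eqVneq x r.-1) => hx1;
  case: (eqVneq y r.-1) => hy1; rewrite /= ?andbF ?andbT //=; lia.
- case: (ltngtP y r) => hyr; case: (ltngtP x r) => hxr; case: (eqVneq x r.-1) => hx1;
  case: (eqVneq y r.-1) => hy1; rewrite /= ?andbF ?andbT //=; lia.
- subst y.
  case: (ltngtP x.+1 r) => hyr; case: (ltngtP x r) => hxr; case: (eqVneq x r.-1) => hx1;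
  rewrite /= ?andbF ?andbT //=; lia.
Qed.

Lemma arith_node2 x y r : let h := ((if x == y then x.+1 else maxn x y) == r) in
  (nat_of_bool h = (h && (x == r)) + (h && (y == r)) +
  ((0 < r) && (x == r.-1) && (y == r.-1)))%N.
Proof.
rewrite /=.
case: (ltngtP x y) => hxy.
- case: (ltngtP y r) => hyr; case: (ltngtP x r) => hxr; case: (eqVneq x r.-1) => hx1;
  case: (eqVneq y r.-1) => hy1; rewrite /= ?andbF ?andbT //=; lia.
- case: (ltngtP y r) => hyr; case: (ltngtP x r) => hxr; case: (eqVneq x r.-1) => hx1;
  case: (eqVneq y r.-1) => hy1; rewrite /= ?andbF ?andbT //=; lia.
- subst y.
  case: (ltngtP x.+1 r) => hyr; case: (ltngtP x r) => hxr; case: (eqVneq x r.-1) => hx1;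
  rewrite /= ?andbF ?andbT //=; lia.
Qed.

Lemma tops_branches r t p : (tops r t p + (p && (reg t == r)) = branches r t)%N.
Proof.
rewrite /branches; case: t => [|a b] /=;
by case: p; case: (_ == r); rewrite /= ?addn0 ?add0n // addnC.
Qed.
Lemma branches_node r a b : branches r (Node a b) =
  (branches r a + branches r b + ((0 < r) && (reg a == r.-1) && (reg b == r.-1)))%N.
Proof.
have E := arith_node2 (reg a) (reg b) r.
have ea := tops_branches r a (reg (Node a b) == r).
have eb := tops_branches r b (reg (Node a b) == r).
rewrite /branches in ea eb *.
have -> : tops r (Node a b) false = ((reg (Node a b) == r) : nat) +
   (tops r a (reg (Node a b) == r) + tops r b (reg (Node a b) == r)).
  by rewrite [LHS]/= andbT.
rewrite -ea -eb.
change (reg (Node a b)) with (if reg a == reg b then (reg a).+1 else maxn (reg a) (reg b)).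
move: E; move: (if reg a == reg b then (reg a).+1 else maxn (reg a) (reg b)) => v /= ->.
move: (nat_of_bool ((v == r) && (reg a == r))) (nat_of_bool ((v==r) && (reg b == r))) (nat_of_bool ((0<r) && (reg a == r.-1) && (reg b == r.-1))) (tops r a (v == r)) (tops r b (v == r)) => p1 p2 p3 p4 p5.
lia.
Qed.

Lemma reg_node_eq a b r : (nat_of_bool (reg (Node a b) == r) =
  ((0 < r) && (reg a == r.-1) && (reg b == r.-1)) +
  ((reg a == r) && (reg b < r)) + ((reg a < r) && (reg b == r)))%N.
Proof. exact: arith_node. Qed.
Local Open Scope ring_scope.
Definition eqm (M : nat) (p q : {poly rat}) := 'X^M %| (p - q).

Lemma eqm_refl M p : eqm M p p.
Proof. by rewrite /eqm subrr dvdp0. Qed.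

Lemma eqm_eq M p q : p = q -> eqm M p q.
Proof. by move=> ->; apply: eqm_refl. Qed.

Lemma eqm_sym M p q : eqm M p q -> eqm M q p.
Proof. by rewrite /eqm -opprB dvdpNr. Qed.

Lemma eqm_trans M p q r : eqm M p q -> eqm M q r -> eqm M p r.
Proof.
move=> h1 h2; rewrite /eqm; have -> : p - r = (p - q) + (q - r) by ring.
exact: dvdp_add.
Qed.

Lemma eqmD M p p' q q' : eqm M p p' -> eqm M q q' -> eqm M (p + q) (p' + q').
Proof.
move=> h1 h2; rewrite /eqm; have -> : p + q - (p' + q') = (p - p') + (q - q') by ring.
exact: dvdp_add.
Qed.

Lemma eqmN M p p' : eqm M p p' -> eqm M (- p) (- p').
Proof. by rewrite /eqm -opprD dvdpNr. Qed.

Lemma eqmB M p p' q q' : eqm M p p' -> eqm M q q' -> eqm M (p - q) (p' - q').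
Proof. by move=> h1 h2; apply: eqmD => //; apply: eqmN. Qed.

Lemma eqmM M p p' q q' : eqm M p p' -> eqm M q q' -> eqm M (p * q) (p' * q').
Proof.
move=> h1 h2; rewrite /eqm; have -> : p * q - p' * q' = (p - p') * q + p' * (q - q') by ring.
by apply: dvdp_add; [apply: dvdp_mulr | apply: dvdp_mull].
Qed.

Lemma eqmX M p p' k : eqm M p p' -> eqm M (p ^+ k) (p' ^+ k).
Proof.
move=> h; elim: k => [|k IH]; first exact: eqm_refl.
by rewrite !exprS; apply: eqmM.
Qed.

Lemma eqm_mulz M z p q : 'X %| z -> eqm M p q -> eqm M.+1 (z * p) (z * q).
Proof.
move=> hz h; rewrite /eqm -mulrBr exprS; exact: dvdp_mul.
Qed.

Lemma eqm_le M M' p q : (M <= M')%N -> eqm M' p q -> eqm M p q.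
Proof. move=> hM h; apply: dvdp_trans h; exact: dvdp_exp2l. Qed.

Lemma eqm_coef M p q i : eqm M p q -> (i < M)%N -> p`_i = q`_i.
Proof.
move=> h hi; apply/eqP; rewrite -subr_eq0 -coefB -(divpK h) coefMXn hi //.
Qed.

Lemma eqm_cancel M x p q : 'X %| x -> eqm M ((1 - x) * p) ((1 - x) * q) -> eqm M p q.
Proof.
move=> hx h; rewrite /eqm.
set V := \sum_(i < M) x ^+ i.
have hV : (1 - x) * V = 1 - x ^+ M.
  rewrite /V; elim: M {h V} => [|M IH]; first by rewrite big_ord0 mulr0 expr0 subrr.
  by rewrite big_ord_recr /= mulrDr IH exprS; ring.
have -> : p - q = V * ((1 - x) * p - (1 - x) * q) + x ^+ M * (p - q).
  have -> : V * ((1 - x) * p - (1 - x) * q) = ((1 - x) * V) * (p - q) by ring.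
  rewrite hV; ring.
apply: dvdp_add; first exact: dvdp_mull.
apply: dvdp_mulr; exact: dvdp_exp2r.
Qed.

Lemma eqm_cancelP M x p q : 'X %| x -> eqm M ((1 + x) * p) ((1 + x) * q) -> eqm M p q.
Proof.
move=> hx h; apply: (@eqm_cancel M (- x)); first by rewrite dvdpNr.
by rewrite opprK.
Qed.
Definition gf (D : nat) (f : btree -> rat) : {poly rat} :=
  \sum_(t <- trees_depth D) f t *: 'X^(Defs.tsize t).

Lemma gf_mul D f g : gf D f * gf D g =
  \sum_(a <- trees_depth D) \sum_(b <- trees_depth D)
     (f a * g b) *: ('X^(Defs.tsize a) * 'X^(Defs.tsize b)).
Proof.
rewrite /gf big_distrl /=; apply: eq_bigr => a _.
rewrite big_distrr /=; apply: eq_bigr => b _.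
by rewrite -scalerAl -scalerAr scalerA.
Qed.

Lemma gf_S D f g1 h1 g2 h2 g3 h3 :
  (forall a b, f (Node a b) = g1 a * h1 b + g2 a * h2 b + g3 a * h3 b) ->
  gf D.+1 f = (f Leaf)%:P + 'X * (gf D g1 * gf D h1 + gf D g2 * gf D h2 + gf D g3 * gf D h3).
Proof.
move=> hf; rewrite /gf /= big_cons /= expr0 alg_polyC; congr (_ + _).
rewrite big_allpairs_dep /= !gf_mul -!big_split /= mulr_sumr; apply: eq_bigr => a _.
rewrite -!big_split /= mulr_sumr; apply: eq_bigr => b _.
rewrite hf exprS exprD !scalerDl.
by rewrite !mulrDr !scalerAr.
Qed.

Lemma gf_D D f g : gf D (fun t => f t + g t) = gf D f + gf D g.
Proof. by rewrite /gf -big_split /=; apply: eq_bigr => t _; rewrite scalerDl. Qed.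

Lemma gf0 D : gf D (fun _ => 0) = 0.
Proof. by rewrite /gf big1 // => t _; rewrite scale0r. Qed.

Lemma gf_ext D f g : (forall t, f t = g t) -> gf D f = gf D g.
Proof. by move=> h; rewrite /gf; apply: eq_bigr => t _; rewrite h. Qed.
Definition Tg D := gf D (fun _ => 1).
Definition Ag D r := gf D (fun t => (nat_of_bool (reg t == r))%:R).
Definition Lg D r := gf D (fun t => (nat_of_bool (reg t < r)%N)%:R).
Definition Sg D r := gf D (fun t => (branches r t)%:R).
Definition ug D := Tg D - 1.

Lemma natrb (b1 b2 : bool) : (nat_of_bool (b1 && b2))%:R = (nat_of_bool b1)%:R * (nat_of_bool b2)%:R :> rat.
Proof. by case: b1; case: b2; rewrite /= ?mul1r ?mul0r. Qed.

Lemma Tg_S D : Tg D.+1 = 1 + 'X * Tg D ^+ 2.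
Proof.
rewrite /Tg (@gf_S D _ (fun _ => 1) (fun _ => 1) (fun _ => 0) (fun _ => 0) (fun _ => 0) (fun _ => 0)).
  by rewrite gf0 !mul0r !addr0 expr2.
by move=> a b; rewrite !mul0r mul1r !addr0.
Qed.

Lemma Tg0 : Tg 0 = 1.
Proof. by rewrite /Tg /gf /= big_cons big_nil addr0 scale1r expr0. Qed.

Lemma Ag_0 D : Ag D 0 = 1.
Proof.
case: D => [|D]; first by rewrite /Ag /gf /= big_cons big_nil addr0 scale1r expr0.
rewrite /Ag (@gf_S D _ (fun _ => 0) (fun _ => 0) (fun _ => 0) (fun _ => 0) (fun _ => 0) (fun _ => 0)).
  by rewrite gf0 !mul0r !addr0 mulr0 addr0.
move=> a b; rewrite reg_node_eq /= !ltn0 /= !andbF /= !mul0r !addr0 //.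
Qed.

Lemma Ag_S D r : Ag D.+1 r.+1 = 'X * (Ag D r ^+ 2 + 2%:R * (Ag D r.+1 * Lg D r.+1)).
Proof.
rewrite /Ag /Lg (@gf_S D _ (fun t => (nat_of_bool (reg t == r))%:R) (fun t => (nat_of_bool (reg t == r))%:R)
   (fun t => (nat_of_bool (reg t == r.+1))%:R) (fun t => (nat_of_bool (reg t < r.+1)%N)%:R)
   (fun t => (nat_of_bool (reg t < r.+1)%N)%:R) (fun t => (nat_of_bool (reg t == r.+1))%:R)).
  by rewrite /= add0r; congr (_ * _); rewrite expr2 -addrA; congr (_ + _); ring.
by move=> a b; rewrite reg_node_eq !natrD /= !natrb.
Qed.

Lemma Lg_0 D : Lg D 0 = 0.
Proof. by rewrite /Lg (@gf_ext D _ (fun _ => 0)) ?gf0 // => t; rewrite ltn0. Qed.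

Lemma Lg_S D r : Lg D r.+1 = Lg D r + Ag D r.
Proof.
rewrite /Lg /Ag -gf_D; apply: gf_ext => t; rewrite ltnS leq_eqVlt orbC.
by case: ltngtP.
Qed.

Lemma Sg_S0 D : Sg D.+1 0 = 1 + 'X * (2%:R * (Tg D * Sg D 0)).
Proof.
rewrite /Sg /Tg (@gf_S D _ (fun t => (branches 0 t)%:R) (fun _ => 1) (fun _ => 1) (fun t => (branches 0 t)%:R)
   (fun _ => 0) (fun _ => 0)).
  by rewrite gf0 mul0r addr0 /branches /=; congr (_ + _ * _); ring.
by move=> a b; rewrite branches_node /= addn0 natrD mulr1 mul1r mul0r addr0.
Qed.

Lemma Sg_S D r : Sg D.+1 r.+1 = 'X * (2%:R * (Tg D * Sg D r.+1) + Ag D r ^+ 2).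
Proof.
rewrite /Sg /Tg /Ag (@gf_S D _ (fun t => (branches r.+1 t)%:R) (fun _ => 1) (fun _ => 1) (fun t => (branches r.+1 t)%:R)
   (fun t => (nat_of_bool (reg t == r))%:R) (fun t => (nat_of_bool (reg t == r))%:R)).
  by rewrite /branches /= add0r; congr (_ * _); ring.
by move=> a b; rewrite branches_node /= !natrD natrb mulr1 mul1r.
Qed.

Lemma ug_S D : ug D.+1 = 'X * (1 + ug D) ^+ 2.
Proof. by rewrite /ug Tg_S; ring. Qed.

Lemma ug0 : ug 0 = 0.
Proof. by rewrite /ug Tg0 subrr. Qed.

Lemma ug_X D : 'X %| ug D.
Proof. case: D => [|D]; first by rewrite ug0 dvdp0. by rewrite ug_S dvdp_mulr. Qed.

Lemma ug_cong D : eqm D.+1 (ug D.+1) (ug D).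
Proof.
elim: D => [|D IH]; first by rewrite ug_S ug0 /eqm subr0 expr1 dvdp_mulr.
rewrite /eqm.
have -> : ug D.+2 - ug D.+1 = 'X * ((ug D.+1 - ug D) * (2%:R + ug D.+1 + ug D)).
  by rewrite (ug_S D.+1) (ug_S D); ring.
by rewrite exprS; apply: dvdp_mul => //; apply: dvdp_mulr.
Qed.
Arguments eqm_trans {M p q r}.
Arguments eqmD {M p p' q q'}.
Arguments eqmM {M p p' q q'}.
Arguments eqm_sym {M p q}.
Ltac eqm_congr := repeat (first [ assumption | apply: eqm_refl | apply: eqmD | apply: eqmM | apply: eqmX | apply: eqmN ]).

Lemma dvdX_sq (u W : {poly rat}) : 'X %| u -> 'X %| (u * W) ^+ 2.
Proof. by move=> h; rewrite expr2; apply: dvdp_mulr; apply: dvdp_mulr. Qed.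

Definition FA (v w : {poly rat}) :=
  ((1 - v ^+ 2) * w) ^+ 2 * (1 - ((v * w) ^+ 2) ^+ 2) +
  2%:R * ((1 - v ^+ 2) * ((v * w) * w)) *
   ((1 + v) * (1 - (v * w) ^+ 2) - (1 - v ^+ 2) * ((v * w) * w)) * (1 - (v * w) ^+ 2).

Lemma stepA M (u u' W W' Ar Ar1 L : {poly rat}) :
   'X %| u' -> u' = 'X * (1 + u) ^+ 2 -> eqm M u' u -> eqm M W' W ->
   eqm M (Ar * (1 - (u * W) ^+ 2)) ((1 - u ^+ 2) * W) ->
   eqm M (Ar1 * (1 - ((u * W) ^+ 2) ^+ 2)) ((1 - u ^+ 2) * ((u * W) * W)) ->
   eqm M (L * (1 - (u * W) ^+ 2)) ((1 + u) * (1 - (u * W) ^+ 2) - (1 - u ^+ 2) * ((u * W) * W)) ->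
   eqm M.+1 ('X * (Ar ^+ 2 + 2%:R * (Ar1 * L)) * (1 - ((u' * W') ^+ 2) ^+ 2))
            ((1 - u' ^+ 2) * ((u' * W') * W')).
Proof.
move=> Xu' eu' hu hW hA1 hA2 hL.
apply: (@eqm_cancelP _ u') => //; apply: (@eqm_cancelP _ u') => //.
apply: (@eqm_cancel _ ((u' * W') ^+ 2)); first exact: dvdX_sq.
apply: (@eqm_cancel _ ((u' * W') ^+ 2)); first exact: dvdX_sq.
set Y := Ar ^+ 2 + _.
apply: (@eqm_trans _ _
   ('X * ((1 + u') ^+ 2 * (Y * (1 - (u' * W') ^+ 2) ^+ 2 * (1 - ((u' * W') ^+ 2) ^+ 2))))).
  by apply: eqm_eq; ring.
have h1 : eqm M ((1 + u') ^+ 2 * (Y * (1 - (u' * W') ^+ 2) ^+ 2 * (1 - ((u' * W') ^+ 2) ^+ 2)))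
              ((1 + u) ^+ 2 * FA u' W').
  apply: eqmM; first by eqm_congr.
  apply: (@eqm_trans _ _ (Y * (1 - (u * W) ^+ 2) ^+ 2 * (1 - ((u * W) ^+ 2) ^+ 2))); first by eqm_congr.
  have -> : Y * (1 - (u * W) ^+ 2) ^+ 2 * (1 - ((u * W) ^+ 2) ^+ 2) =
     (Ar * (1 - (u * W) ^+ 2)) ^+ 2 * (1 - ((u * W) ^+ 2) ^+ 2) +
     2%:R * (Ar1 * (1 - ((u * W) ^+ 2) ^+ 2)) * (L * (1 - (u * W) ^+ 2)) * (1 - (u * W) ^+ 2).
    by rewrite /Y; ring.
  by apply: (@eqm_trans _ _ (FA u W)); rewrite /FA; [eqm_congr | apply: eqm_sym; eqm_congr].
have h2 := @eqm_mulz M 'X _ _ (dvdpp 'X) h1.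
apply: (eqm_trans h2).
apply: eqm_eq; rewrite [LHS]mulrA -eu' /FA; ring.
Qed.

Definition FS (v w : {poly rat}) :=
  2%:R * (1 + v) * ((1 - v ^+ 2) * ((v * w) * w)) + ((1 - v ^+ 2) * w) ^+ 2.

Lemma stepS M (u u' W W' S Ar : {poly rat}) :
   'X %| u' -> u' = 'X * (1 + u) ^+ 2 -> eqm M u' u -> eqm M W' W ->
   eqm M (S * (1 - (u * W) ^+ 2) ^+ 2) ((1 - u ^+ 2) * ((u * W) * W)) ->
   eqm M (Ar * (1 - (u * W) ^+ 2)) ((1 - u ^+ 2) * W) ->
   eqm M.+1 ('X * (2%:R * ((1 + u) * S) + Ar ^+ 2) * (1 - (u' * W') ^+ 2) ^+ 2)
            ((1 - u' ^+ 2) * ((u' * W') * W')).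
Proof.
move=> Xu' eu' hu hW hS hA1.
apply: (@eqm_cancelP _ u') => //; apply: (@eqm_cancelP _ u') => //.
set Y := 2%:R * _ + _.
apply: (@eqm_trans _ _ ('X * ((1 + u') ^+ 2 * (Y * (1 - (u' * W') ^+ 2) ^+ 2)))).
  by apply: eqm_eq; ring.
have h1 : eqm M ((1 + u') ^+ 2 * (Y * (1 - (u' * W') ^+ 2) ^+ 2)) ((1 + u) ^+ 2 * FS u' W').
  apply: eqmM; first by eqm_congr.
  apply: (@eqm_trans _ _ (Y * (1 - (u * W) ^+ 2) ^+ 2)); first by eqm_congr.
  have -> : Y * (1 - (u * W) ^+ 2) ^+ 2 =
     2%:R * (1 + u) * (S * (1 - (u * W) ^+ 2) ^+ 2) + (Ar * (1 - (u * W) ^+ 2)) ^+ 2.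
    by rewrite /Y; ring.
  by apply: (@eqm_trans _ _ (FS u W)); rewrite /FS; [eqm_congr | apply: eqm_sym; eqm_congr].
have h2 := @eqm_mulz M 'X _ _ (dvdpp 'X) h1.
apply: (eqm_trans h2).
apply: eqm_eq; rewrite [LHS]mulrA -eu' /FS; ring.
Qed.

Lemma stepS0 M (u u' S : {poly rat}) :
   'X %| u' -> u' = 'X * (1 + u) ^+ 2 -> eqm M u' u ->
   eqm M (S * (1 - u) ^+ 2) (1 - u ^+ 2) ->
   eqm M.+1 ((1 + 'X * (2%:R * ((1 + u) * S))) * (1 - u') ^+ 2) (1 - u' ^+ 2).
Proof.
move=> Xu' eu' hu hS.
apply: (@eqm_cancelP _ u') => //; apply: (@eqm_cancelP _ u') => //.
apply: (@eqm_trans _ _ ((1 + u') ^+ 2 * (1 - u') ^+ 2 +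
    'X * ((1 + u') ^+ 2 * (2%:R * (1 + u) * (S * (1 - u') ^+ 2))))).
  by apply: eqm_eq; ring.
have h1 : eqm M ((1 + u') ^+ 2 * (2%:R * (1 + u) * (S * (1 - u') ^+ 2)))
                ((1 + u) ^+ 2 * (2%:R * (1 + u') * (1 - u' ^+ 2))).
  apply: eqmM; first by eqm_congr.
  apply: (@eqm_trans _ _ (2%:R * (1 + u) * (S * (1 - u) ^+ 2))); first by eqm_congr.
  apply: (@eqm_trans _ _ (2%:R * (1 + u) * (1 - u ^+ 2))); first by eqm_congr.
  by apply: eqm_sym; eqm_congr.
have h2 := @eqm_mulz M 'X _ _ (dvdpp 'X) h1.
have h3 := eqmD (eqm_refl M.+1 ((1 + u') ^+ 2 * (1 - u') ^+ 2)) h2.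
apply: (eqm_trans h3).
apply: eqm_eq; rewrite [X in _ + X]mulrA -eu'; ring.
Qed.

Lemma stepB M k (u u' B0 B1 B2 : {poly rat}) :
   'X %| u' -> u' = 'X * (1 + u) ^+ 2 -> eqm M u' u ->
   eqm M (B0 * (1 - u)) (u ^+ k * (1 + u)) ->
   eqm M (B1 * (1 - u)) (u ^+ k.+1 * (1 + u)) ->
   eqm M (B2 * (1 - u)) (u ^+ k.+2 * (1 + u)) ->
   eqm M.+1 ('X * (B0 + 2%:R * B1 + B2) * (1 - u')) (u' ^+ k.+1 * (1 + u')).
Proof.
move=> Xu' eu' hu h0 h1 h2.
have e1 : eqm M ((B0 + 2%:R * B1 + B2) * (1 - u')) (u ^+ k * (1 + u) + 2%:R * (u ^+ k.+1 * (1 + u)) + u ^+ k.+2 * (1 + u)).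
  apply: (@eqm_trans _ _ ((B0 + 2%:R * B1 + B2) * (1 - u))); first by eqm_congr.
  apply: (@eqm_trans _ _ (B0 * (1 - u) + 2%:R * (B1 * (1 - u)) + B2 * (1 - u))); first by apply: eqm_eq; ring.
  by eqm_congr.
have e2 := @eqm_mulz M 'X _ _ (dvdpp 'X) e1.
apply: (@eqm_trans _ _ ('X * ((B0 + 2%:R * B1 + B2) * (1 - u')))); first by apply: eqm_eq; ring.
apply: (eqm_trans e2).
apply: (@eqm_trans _ _ (u' * (u ^+ k * (1 + u)))).
  by apply: eqm_eq; rewrite eu' !exprS; ring.
have e3 : eqm M (u ^+ k * (1 + u)) (u' ^+ k * (1 + u')) by apply: eqm_sym; eqm_congr.
apply: (eqm_trans (@eqm_mulz M u' _ _ Xu' e3)).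
by apply: eqm_eq; rewrite exprS; ring.
Qed.

Lemma stepB0 M (u u' B0 B1 : {poly rat}) :
   'X %| u' -> u' = 'X * (1 + u) ^+ 2 -> eqm M u' u ->
   eqm M (B0 * (1 - u)) (u ^+ 0 * (1 + u)) ->
   eqm M (B1 * (1 - u)) (u ^+ 1 * (1 + u)) ->
   eqm M.+1 ((1 + 'X * (2%:R * B0 + 2%:R * B1)) * (1 - u')) (u' ^+ 0 * (1 + u')).
Proof.
move=> Xu' eu' hu h0 h1.
have e1 : eqm M ((2%:R * B0 + 2%:R * B1) * (1 - u')) (2%:R * (u ^+ 0 * (1 + u)) + 2%:R * (u ^+ 1 * (1 + u))).
  apply: (@eqm_trans _ _ ((2%:R * B0 + 2%:R * B1) * (1 - u))); first by eqm_congr.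
  apply: (@eqm_trans _ _ (2%:R * (B0 * (1 - u)) + 2%:R * (B1 * (1 - u)))); first by apply: eqm_eq; ring.
  by eqm_congr.
have e2 := @eqm_mulz M 'X _ _ (dvdpp 'X) e1.
apply: (@eqm_trans _ _ ((1 - u') + 'X * ((2%:R * B0 + 2%:R * B1) * (1 - u')))); first by apply: eqm_eq; ring.
have h3 := eqmD (eqm_refl M.+1 (1 - u')) e2.
apply: (eqm_trans h3).
apply: eqm_eq; rewrite eu'; ring.
Qed.
Lemma eqm_coefP M (p q : {poly rat}) : (forall i, (i < M)%N -> p`_i = q`_i) -> eqm M p q.
Proof.
move=> h; rewrite /eqm; set d := p - q.
have hd : forall i, (i < M)%N -> d`_i = 0 by move=> i hi; rewrite /d coefB h ?subrr.
apply/dvdpP; exists (\poly_(i < size d) d`_(i + M)).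
apply/polyP => i; rewrite coefMXn.
case: ltnP => hi; first by rewrite hd.
rewrite coef_poly subnK //; case: ltnP => // hs.
by rewrite nth_default //; apply: leq_trans hs (leq_subr _ _).
Qed.

Definition Bp M k : {poly rat} := \poly_(i < M) ('C(i.*2, i + k))%:R.

Lemma binSS m n : 'C(m.+2, n.+2) = ('C(m, n.+2) + 2 * 'C(m, n.+1) + 'C(m, n))%N.
Proof. rewrite !binS; lia. Qed.

Lemma coef2 (p : {poly rat}) i : (2%:R * p)`_i = 2%:R * p`_i.
Proof. by rewrite !mulr_natl coefMn. Qed.

Lemma BrecS D k : eqm D.+2 (Bp D.+2 k.+1) ('X * (Bp D.+1 k + 2%:R * Bp D.+1 k.+1 + Bp D.+1 k.+2)).
Proof.
apply: eqm_coefP => i hi; rewrite coefXM coef_poly hi.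
case: i hi => [|j] hj /=; first by rewrite bin0n.
rewrite !coefD coef2 !coef_poly -ltnS hj.
rewrite doubleS addSn addnS binSS !natrD !addnS; ring.
Qed.

Lemma bin_sym_aux l : 'C(l.+1.*2, l) = 'C(l.+1.*2, l.+2).
Proof.
have h : (l.+2 <= l.+1.*2)%N by rewrite -addnn; lia.
rewrite -(bin_sub h); congr binomial; rewrite -addnn; lia.
Qed.

Lemma Brec0 D : eqm D.+2 (Bp D.+2 0) (1 + 'X * (2%:R * Bp D.+1 0 + 2%:R * Bp D.+1 1)).
Proof.
apply: eqm_coefP => i hi; rewrite coefD coefXM coef_poly hi coefC.
case: i hi => [|j] hj; first by rewrite /= bin0n addr0.
rewrite [j.+1 == 0]/= add0r !coefD !coef2 !coef_poly -ltnS hj !addn0.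
case: j hj => [|l] hl; first by rewrite /= bin0n.
rewrite -[l.+2.-1]/(l.+1) addn1 [l.+2.*2]doubleS (binSS (l.+1.*2) l).
rewrite (bin_sym_aux l).
set a := 'C(l.+1.*2, l.+2); set b := 'C(l.+1.*2, l.+1).
ring.
Qed.

Lemma HB D k : eqm D.+1 (Bp D.+1 k * (1 - ug D)) (ug D ^+ k * (1 + ug D)).
Proof.
elim: D k => [|D IH] k.
  apply: eqm_coefP => i; rewrite ltnS leqn0 => /eqP ->.
  rewrite ug0 subr0 addr0 !mulr1 coef_poly /= add0n bin0n.
  by case: k => [|k]; rewrite ?expr0 ?coef1 // expr0n coef0.
case: k => [|k].
  have h := @stepB0 D.+1 _ _ _ _ (ug_X D.+1) (ug_S D) (ug_cong D) (IH 0%N) (IH 1%N).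
  exact: (eqm_trans (eqmM (Brec0 D) (eqm_refl _ _)) h).
have h := @stepB D.+1 k _ _ _ _ _ (ug_X D.+1) (ug_S D) (ug_cong D) (IH k) (IH k.+1) (IH k.+2).
exact: (eqm_trans (eqmM (BrecS D k) (eqm_refl _ _)) h).
Qed.
Lemma pw1 (v : {poly rat}) r : v ^+ (2 ^ r) = v * v ^+ (2 ^ r - 1).
Proof. by rewrite -exprS subn1 prednK // expn_gt0. Qed.

Lemma pw2 (v : {poly rat}) r : v ^+ (2 ^ r.+1) = (v ^+ (2 ^ r)) ^+ 2.
Proof. by rewrite expnS mulnC exprM. Qed.

Lemma pw3 (v : {poly rat}) r : v ^+ (2 ^ r.+1 - 1) = v ^+ (2 ^ r) * v ^+ (2 ^ r - 1).
Proof.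
rewrite -exprD; congr (_ ^+ _); rewrite expnS.
have := expn_gt0 2 r; move: (2 ^ r)%N => x hx; lia.
Qed.

Definition HA D r := eqm D.+1 (Ag D r * (1 - (ug D ^+ (2 ^ r)) ^+ 2)) ((1 - ug D ^+ 2) * ug D ^+ (2 ^ r - 1)).
Definition HS D r := eqm D.+1 (Sg D r * (1 - ug D ^+ (2 ^ r)) ^+ 2) ((1 - ug D ^+ 2) * ug D ^+ (2 ^ r - 1)).
Definition HL D r := eqm D.+1 (Lg D r * (1 - ug D ^+ (2 ^ r)))
  ((1 + ug D) * (1 - ug D ^+ (2 ^ r)) - (1 - ug D ^+ 2) * ug D ^+ (2 ^ r - 1)).

Lemma HL_of D : (forall r, HA D r) -> forall r, HL D r.
Proof.
move=> hA; elim=> [|r IH].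
  rewrite /HL Lg_0 mul0r expn0 expr1 subnn expr0 mulr1; apply: eqm_eq; ring.
have h := hA r; rewrite /HA in h; rewrite /HL in IH *.
rewrite Lg_S pw2 pw3.
move: h IH; set q := ug D ^+ (2 ^ r); set w := ug D ^+ (2 ^ r - 1); set u := ug D => h IH.
apply: (@eqm_trans _ _ ((Lg D r * (1 - q)) * (1 + q) + Ag D r * (1 - q ^+ 2))).
  by apply: eqm_eq; ring.
apply: (@eqm_trans _ _ (((1 + u) * (1 - q) - (1 - u ^+ 2) * w) * (1 + q) + (1 - u ^+ 2) * w)).
  by eqm_congr.
by apply: eqm_eq; ring.
Qed.

Lemma gf_0 f : gf 0 f = (f Leaf)%:P.
Proof. by rewrite /gf /= big_cons big_nil addr0 expr0 alg_polyC. Qed.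

Lemma Tg_u D : Tg D = 1 + ug D.
Proof. by rewrite /ug; ring. Qed.

Lemma pow0_pos r : (2 ^ r.+1 - 1 == 0)%N = false.
Proof. rewrite expnS; have := expn_gt0 2 r; move: (2 ^ r)%N => x hx; apply/eqP; lia. Qed.

Lemma HAS D : (forall r, HA D r) /\ (forall r, HS D r).
Proof.
elim: D => [|D [IHA IHS]].
  split=> r; apply: eqm_eq; rewrite ?/Ag ?/Sg gf_0 ug0 /=;
  (case: r => [|r]; [rewrite expn0 subnn expr0 !expr0n /= | rewrite !expr0n /= expn_eq0 pow0_pos /=]);
  rewrite /branches /= ?polyC0 ?polyC1; ring.
have IHL := @HL_of D IHA.
have hu := ug_cong D; have Xu' := ug_X D.+1; have eu' := ug_S D.
have hA : forall r, HA D.+1 r.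
  case=> [|r].
    by rewrite /HA Ag_0 expn0 expr1 subnn expr0; apply: eqm_eq; ring.
  have h1 := IHA r; have h2 := IHA r.+1; have h3 := IHL r.+1.
  rewrite /HA /HL in h1 h2 h3 *.
  rewrite pw1 in h1; rewrite pw2 pw3 pw1 in h2; rewrite pw2 pw3 pw1 in h3.
  rewrite Ag_S pw2 pw3 pw1.
  have hW : eqm D.+1 (ug D.+1 ^+ (2 ^ r - 1)) (ug D ^+ (2 ^ r - 1)) by apply: eqmX.
  exact: (@stepA D.+1 _ _ _ _ _ _ _ Xu' eu' hu hW h1 h2 h3).
split=> //; case=> [|r].
  have h := IHS 0%N; rewrite /HS expn0 expr1 subnn expr0 mulr1 in h *.
  rewrite Sg_S0 Tg_u.
  rewrite expr1 expr0 mulr1. exact: (@stepS0 D.+1 _ _ _ Xu' eu' hu h).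
have h1 := IHA r; have h2 := IHS r.+1.
rewrite /HA /HS in h1 h2 *.
rewrite pw1 in h1; rewrite pw2 pw3 pw1 in h2.
rewrite Sg_S Tg_u pw2 pw3 pw1.
have hW : eqm D.+1 (ug D.+1 ^+ (2 ^ r - 1)) (ug D ^+ (2 ^ r - 1)) by apply: eqmX.
exact: (@stepS D.+1 _ _ _ _ _ _ Xu' eu' hu hW h2 h1).
Qed.
Lemma gf_coef n f : (gf n f)`_n = \sum_(t <- trees n) f t.
Proof.
rewrite /gf /trees coef_sum big_filter [RHS]big_mkcond /=; apply: eq_bigr => t _.
by rewrite coefZ coefXn eq_sym; case: (_ == _); rewrite ?mulr1 ?mulr0.
Qed.

Lemma binZ_eq n k : binZ n.*2 (n%:Z - k%:Z) = 'C(n.*2, n + k).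
Proof.
case: (leqP k n) => h.
  have -> : n%:Z - k%:Z = (n - k)%N%:Z by rewrite subzn.
  rewrite /binZ -(@bin_sub n.*2 (n - k)); [congr binomial; rewrite -addnn; lia | rewrite -addnn; lia].
have -> : n%:Z - k%:Z = Negz (k - n).-1.
  rewrite NegzE prednK ?subn_gt0 //; lia.
by rewrite /= bin_small // -addnn; lia.
Qed.

Lemma eqm_sum M (s : seq nat) (F G : nat -> {poly rat}) :
  (forall i, i \in s -> eqm M (F i) (G i)) -> eqm M (\sum_(i <- s) F i) (\sum_(i <- s) G i).
Proof.
elim: s => [|x s IH] h; first by rewrite !big_nil; apply: eqm_refl.
rewrite !big_cons; apply: eqmD; first by apply: h; rewrite inE eqxx.
by apply: IH => i hi; apply: h; rewrite inE hi orbT.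
Qed.

Lemma Bcomb D m : (0 < m)%N ->
  eqm D.+1 (Bp D.+1 m.-1 - 2%:R * Bp D.+1 m + Bp D.+1 m.+1) ((1 - ug D ^+ 2) * ug D ^+ m.-1).
Proof.
move=> hm; apply: (@eqm_cancel _ (ug D)); first exact: ug_X.
have h0 := HB D m.-1; have h1 := HB D m; have h2 := HB D m.+1.
apply: (@eqm_trans _ _ (Bp D.+1 m.-1 * (1 - ug D) - 2%:R * (Bp D.+1 m * (1 - ug D)) + Bp D.+1 m.+1 * (1 - ug D))).
  by apply: eqm_eq; ring.
apply: (@eqm_trans _ _ (ug D ^+ m.-1 * (1 + ug D) - 2%:R * (ug D ^+ m * (1 + ug D)) + ug D ^+ m.+1 * (1 + ug D))).
  by eqm_congr.
apply: eqm_eq; rewrite -(prednK hm) /=; rewrite !exprS; ring.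
Qed.

Lemma geom N (q : {poly rat}) :
  (1 - q) ^+ 2 * \sum_(1 <= l < N.+1) l%:R * q ^+ l.-1 = 1 - N.+1%:R * q ^+ N + N%:R * q ^+ N.+1.
Proof.
elim: N => [|N IH]; first by rewrite big_geq // mulr0 expr0 expr1; ring.
rewrite big_nat_recr //= mulrDr IH !exprS -!natr1 /=; ring.
Qed.

Lemma Xpow (u : {poly rat}) k j : 'X %| u -> (k <= j)%N -> 'X^k %| u ^+ j.
Proof. by move=> h hkj; apply: dvdp_trans (dvdp_exp2l 'X hkj) (dvdp_exp2r j h). Qed.

Lemma coefnat (p : {poly rat}) l i : (l%:R * p)`_i = l%:R * p`_i.
Proof. by rewrite !mulr_natl coefMn. Qed.

Theorem proposition3 (r n N : nat) (hN : (n + 2 <= N)%N) :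
  E_branches n r =
  (n.+1)%:R / ('C(n.*2, n))%:R *
  \sum_(1 <= l < N)
    (l%:R * ((binZ n.*2 (n.+1%:Z - (l * 2 ^ r)%N%:Z))%:R
             - 2 * (binZ n.*2 (n%:Z - (l * 2 ^ r)%N%:Z))%:R
             + (binZ n.*2 (n%:Z - 1 - (l * 2 ^ r)%N%:Z))%:R) : rat).
Proof.
case: N hN => [|N] hN; first by rewrite addn2 in hN.
have Xu : 'X %| ug n := ug_X n.
have Xq : 'X %| ug n ^+ (2 ^ r) by rewrite pw1 dvdp_mulr.
have hS := (HAS n).2 r; rewrite /HS in hS.
set Sig := \sum_(1 <= l < N.+1) l%:R *
   (Bp n.+1 (l * 2 ^ r).-1 - 2%:R * Bp n.+1 (l * 2 ^ r) + Bp n.+1 (l * 2 ^ r).+1).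
have hSig : eqm n.+1 (Sg n r) Sig.
  apply: (@eqm_cancel _ (ug n ^+ (2 ^ r))) => //; apply: (@eqm_cancel _ (ug n ^+ (2 ^ r))) => //.
  apply: (@eqm_trans _ _ ((1 - ug n ^+ 2) * ug n ^+ (2 ^ r - 1))).
    apply: (@eqm_trans _ _ (Sg n r * (1 - ug n ^+ (2 ^ r)) ^+ 2)) => //.
    by apply: eqm_eq; ring.
  have e1 : eqm n.+1 Sig (\sum_(1 <= l < N.+1) l%:R * ((1 - ug n ^+ 2) * ug n ^+ (l * 2 ^ r).-1)).
    apply: eqm_sum => l; rewrite mem_index_iota => /andP [hl _].
    apply: eqmM; first exact: eqm_refl.
    by apply: Bcomb; rewrite muln_gt0 hl expn_gt0.
  have e2 : \sum_(1 <= l < N.+1) l%:R * ((1 - ug n ^+ 2) * ug n ^+ (l * 2 ^ r).-1) =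
     (1 - ug n ^+ 2) * ug n ^+ (2 ^ r - 1) * \sum_(1 <= l < N.+1) l%:R * (ug n ^+ (2 ^ r)) ^+ l.-1.
    rewrite mulr_sumr; apply: eq_big_nat => l /andP [hl _].
    have -> : ((l * 2 ^ r).-1 = (2 ^ r - 1) + 2 ^ r * l.-1)%N.
      have := expn_gt0 2 r; move: (2 ^ r)%N => x hx; rewrite -(prednK hl); simpl; nia.
    by rewrite exprD exprM; ring.
  apply: eqm_sym; apply: (eqm_trans (eqmM (eqm_refl _ _) (eqmM (eqm_refl _ _) e1))).
  rewrite e2.
  set q := ug n ^+ (2 ^ r); set w := (1 - ug n ^+ 2) * ug n ^+ (2 ^ r - 1).
  apply: (@eqm_trans _ _ (w * ((1 - q) ^+ 2 * \sum_(1 <= l < N.+1) l%:R * q ^+ l.-1))).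
    by apply: eqm_eq; ring.
  rewrite geom /eqm.
  have -> : w * (1 - N.+1%:R * q ^+ N + N%:R * q ^+ N.+1) - w = w * (N%:R * q - N.+1%:R) * q ^+ N.
    by rewrite exprS; ring.
  apply: dvdp_mull; rewrite -exprM; apply: Xpow => //.
  have := expn_gt0 2 r; move: (2 ^ r)%N => x hx; nia.
have hT : eqm n.+1 (Tg n) (Bp n.+1 0 - Bp n.+1 1).
  apply: (@eqm_cancel _ (ug n)) => //.
  have h0 := HB n 0; have h1 := HB n 1.
  apply: (@eqm_trans _ _ (ug n ^+ 0 * (1 + ug n) - ug n ^+ 1 * (1 + ug n))).
    by apply: eqm_eq; rewrite Tg_u; ring.
  apply: eqm_sym; apply: (@eqm_trans _ _ (Bp n.+1 0 * (1 - ug n) - Bp n.+1 1 * (1 - ug n))).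
    by apply: eqm_eq; ring.
  by eqm_congr.
have c1 : \sum_(t <- trees n) (branches r t)%:R = Sig`_n.
  by rewrite -gf_coef -/(Sg n r) (@eqm_coef _ _ _ n hSig (ltnSn n)).
have c2 : (size (trees n))%:R = ('C(n.*2, n))%:R - ('C(n.*2, n.+1))%:R :> rat.
  rewrite -sum1_size natr_sum -gf_coef -/(Tg n) (@eqm_coef _ _ _ n hT (ltnSn n)).
  by rewrite coefB !coef_poly ltnSn addn0 addn1.
rewrite /E_branches c1 c2.
have -> : Sig`_n = \sum_(1 <= l < N.+1) l%:R * (('C(n.*2, n + (l * 2 ^ r).-1))%:R
          - 2 * ('C(n.*2, n + l * 2 ^ r))%:R + ('C(n.*2, n + (l * 2 ^ r).+1))%:R).
  rewrite /Sig coef_sum; apply: eq_bigr => l _.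
  by rewrite coefnat !coefD coefN coef2 !coef_poly ltnSn.
have -> : \sum_(1 <= l < N.+1)
    (l%:R * ((binZ n.*2 (n.+1%:Z - (l * 2 ^ r)%N%:Z))%:R
             - 2 * (binZ n.*2 (n%:Z - (l * 2 ^ r)%N%:Z))%:R
             + (binZ n.*2 (n%:Z - 1 - (l * 2 ^ r)%N%:Z))%:R) : rat) =
    \sum_(1 <= l < N.+1) l%:R * (('C(n.*2, n + (l * 2 ^ r).-1))%:R
          - 2 * ('C(n.*2, n + l * 2 ^ r))%:R + ('C(n.*2, n + (l * 2 ^ r).+1))%:R).
  apply: eq_big_nat => l /andP [hl _].
  have hm : (0 < l * 2 ^ r)%N by rewrite muln_gt0 hl expn_gt0.
  move: hm; move: (l * 2 ^ r)%N => m hm.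
  have -> : n.+1%:Z - m%:Z = n%:Z - m.-1%:Z by rewrite -(prednK hm); lia.
  have -> : n%:Z - 1 - m%:Z = n%:Z - m.+1%:Z by lia.
  by rewrite !binZ_eq.
set A := \sum_(_ <= _ < _) _.
have hc : ('C(n.*2, n))%:R != 0 :> rat by rewrite pnatr_eq0 -lt0n bin_gt0 -addnn leq_addr.
have hn : (n.+1)%:R != 0 :> rat by rewrite pnatr_eq0.
have hd : ('C(n.*2, n.+1))%:R = n%:R * ('C(n.*2, n))%:R / (n.+1)%:R :> rat.
  have e := mul_bin_left n.*2 n.
  have e2 : (n.*2 - n)%N = n by rewrite -addnn addnK.
  rewrite e2 in e; move/(congr1 (fun x => x%:R : rat)): e; rewrite !natrM => e.
  rewrite -e; field; by rewrite nat1r.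
rewrite hd; field; by rewrite hc nat1r.
Qed.
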